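(* Let $G=(V,E)$ be a connected graph with $n$ vertices and $m\ge1$ edges $e_1,\dots,e_m$ with positive integer weights $w_1,\dots,w_m$, and let $w_{\max}=\max_i w_i$. Consider the (1+1)~EA for the minimum spanning tree problem started with an arbitrary bit string $x^{(0)}\in\{0,1\}^m$ that encodes a spanning tree of $G$. Then its expected optimization time (the expected first time $t$ at which $x^{(t)}$ encodes a minimum spanning tree) is at most $$2\mathrm{e}\, m^2\,(1+\ln m+\ln w_{\max}).$$
   Context: A bit string $x\in\{0,1\}^m$ encodes the edge set $\{e_i: x_i=1\}$; its weight is $w(x)=\sum_{i=1}^m w_ix_i$. The (1+1)~EA for the MST problem, started at a spanning tree $x^{(0)}$: for $t=0,1,2,\dots$, sample $y$ by flipping each bit of $x^{(t)}$ independently with probability $1/m$; set $x^{(t+1)}:=y$ if $y$ encodes a spanning tree of $G$ and $w(y)\le w(x^{(t)})$, and $x^{(t+1)}:=x^{(t)}$ otherwise. (This is the behavior of minimizing the fitness $w(x)+p(x)$ where the penalty $p$ ensures that once a spanning tree is reached, non-spanning-trees are never accepted.) *)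

(* Defs.v *)
From Stdlib Require Import Reals List Arith Bool ClassicalEpsilon.
Import ListNotations.
Open Scope R_scope.

(* Graphs: vertices are 0..n-1, edges e_1..e_m are the list es (e_i = nth (i-1) es),
   bit strings x are lists of bools of length m, bit i (0-based) selects edge nth i es. *)

Inductive reach (es : list (nat * nat)) : nat -> nat -> Prop :=
| reach_refl u : reach es u u
| reach_step u v w : (In (u, v) es \/ In (v, u) es) -> reach es v w -> reach es u w.

Definition sel_edges (es : list (nat * nat)) (x : list bool) (keep : nat -> bool)
  : list (nat * nat) :=
  map snd (filter (fun p : nat * (nat * nat) => andb (nth (fst p) x false) (keep (fst p)))
                  (combine (seq 0 (length es)) es)).

(* x encodes a spanning tree: the selected edge set spans (connects) all n vertices
   and is acyclic (no selected edge lies on a cycle: its endpoints are not connected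
   by the other selected edges). *)
Definition is_spanning_tree (n : nat) (es : list (nat * nat)) (x : list bool) : Prop :=
  length x = length es /\
  (forall u v, (u < n)%nat -> (v < n)%nat -> reach (sel_edges es x (fun _ => true)) u v) /\
  (forall i, (i < length es)%nat -> nth i x false = true ->
     ~ reach (sel_edges es x (fun j => negb (Nat.eqb j i)))
             (fst (nth i es (0%nat, 0%nat))) (snd (nth i es (0%nat, 0%nat)))).

Definition weight (ws : list nat) (x : list bool) : nat :=
  fold_right Nat.add 0%nat (map (fun p : bool * nat => if fst p then snd p else 0%nat) (combine x ws)).

Definition is_mst (n : nat) (es : list (nat * nat)) (ws : list nat) (x : list bool) : Prop :=
  is_spanning_tree n es x /\
  forall y, is_spanning_tree n es y -> (weight ws x <= weight ws y)%nat.

Fixpoint bitstrings (m : nat) : list (list bool) :=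
  match m with
  | O => [[]]
  | S k => map (cons false) (bitstrings k) ++ map (cons true) (bitstrings k)
  end.

Definition Rsum {A} (l : list A) (f : A -> R) : R := fold_right Rplus 0 (map f l).

Definition indicator (P : Prop) : R :=
  if excluded_middle_informative P then 1 else 0.

(* Probability that standard bit mutation (rate 1/m) turns x into y. *)
Definition mut_prob (m : nat) (x y : list bool) : R :=
  fold_right Rmult 1
    (map (fun p : bool * bool => if Bool.eqb (fst p) (snd p) then 1 - / INR m else / INR m)
         (combine x y)).

Definition ea_select (n : nat) (es : list (nat * nat)) (ws : list nat) (x y : list bool)
  : list bool :=
  if excluded_middle_informative (is_spanning_tree n es y /\ (weight ws y <= weight ws x)%nat)
  then y else x.

(* surv t z = Pr[ x^(t) = z and x^(s) is not an MST for all s <= t ]. *)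
Fixpoint surv (n : nat) (es : list (nat * nat)) (ws : list nat) (x0 : list bool) (t : nat)
  : list bool -> R :=
  match t with
  | O => fun z => indicator (z = x0 /\ ~ is_mst n es ws z)
  | S t' =>
      let prev := surv n es ws x0 t' in
      fun z => indicator (~ is_mst n es ws z) *
        Rsum (bitstrings (length es)) (fun x => prev x *
          Rsum (bitstrings (length es)) (fun y =>
            mut_prob (length es) x y * indicator (ea_select n es ws x y = z)))
  end.

(* Pr[T > t], T = optimization time (first t with x^(t) an MST). *)
Definition tail_prob (n : nat) (es : list (nat * nat)) (ws : list nat) (x0 : list bool)
  (t : nat) : R :=
  Rsum (bitstrings (length es)) (surv n es ws x0 t).

Definition simple_graph (n : nat) (es : list (nat * nat)) : Prop :=
  (forall e, In e es -> (fst e < n)%nat /\ (snd e < n)%nat /\ fst e <> snd e) /\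
  (forall i j, (i < length es)%nat -> (j < length es)%nat -> i <> j ->
     nth i es (0%nat, 0%nat) <> nth j es (0%nat, 0%nat) /\
     nth i es (0%nat, 0%nat) <> (snd (nth j es (0%nat, 0%nat)), fst (nth j es (0%nat, 0%nat)))).

Definition connected_graph (n : nat) (es : list (nat * nat)) : Prop :=
  forall u v, (u < n)%nat -> (v < n)%nat -> reach es u v.

Definition wmax (ws : list nat) : nat := fold_right Nat.max 0%nat ws.

(* Main.v *)
Require Import Defs.
From Stdlib Require Import Reals List Arith Lia ZArith Bool ClassicalEpsilon Classical Permutation Lra.
Import ListNotations.

Lemma reach_trans H a b c : reach H a b -> reach H b c -> reach H a c.
Proof. induction 1; intros; auto. eapply reach_step; eauto. Qed.

Lemma reach_edge H a b : In (a,b) H \/ In (b,a) H -> reach H a b.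
Proof. intros; eapply reach_step; eauto; apply reach_refl. Qed.

Lemma reach_sym H a b : reach H a b -> reach H b a.
Proof.
  induction 1. apply reach_refl.
  eapply reach_trans; eauto. apply reach_edge. tauto.
Qed.

Lemma reach_mono H1 H2 : (forall e, In e H1 -> In e H2) -> forall a b, reach H1 a b -> reach H2 a b.
Proof. intros Hs a b; induction 1. apply reach_refl. eapply reach_step; eauto. destruct H; auto. Qed.

Lemma reach_decomp H1 H2 p q : (forall e, In e H2 -> In e H1 \/ e = (p,q)) ->
  forall a b, reach H2 a b ->
  reach H1 a b \/ (reach H1 a p /\ reach H1 q b) \/ (reach H1 a q /\ reach H1 p b).
Proof.
  intros Hs a b; induction 1. left; apply reach_refl.
  assert (Huv : reach H1 u v \/ (u = p /\ v = q) \/ (u = q /\ v = p)).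
  { destruct H as [H|H]; destruct (Hs _ H) as [H'|H'].
    - left; apply reach_edge; auto.
    - inversion H'; subst; auto.
    - left; apply reach_edge; auto.
    - inversion H'; subst; auto. }
  destruct Huv as [Huv|[[-> ->]|[-> ->]]].
  - destruct IHreach as [X|[[X Y]|[X Y]]].
    + left; eapply reach_trans; eauto.
    + right; left; split; auto; eapply reach_trans; eauto.
    + right; right; split; auto; eapply reach_trans; eauto.
  - destruct IHreach as [X|[[X Y]|[X Y]]].
    + right; left; split; auto; apply reach_refl.
    + right; left; split; auto; apply reach_refl.
    + left; auto.
  - destruct IHreach as [X|[[X Y]|[X Y]]].
    + right; right; split; auto; apply reach_refl.
    + left; auto.
    + right; right; split; auto; apply reach_refl.
Qed.

Inductive reachn (H : list (nat*nat)) : nat -> nat -> nat -> Prop :=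
| rn0 a : reachn H 0 a a
| rnS k a b c : reachn H k a b -> (In (b,c) H \/ In (c,b) H) -> reachn H (S k) a c.

Lemma reachn_cons H k u v w : (In (u,v) H \/ In (v,u) H) -> reachn H k v w -> reachn H (S k) u w.
Proof.
  intros Hu; induction 1.
  - econstructor; [apply rn0|tauto].
  - econstructor; eauto.
Qed.

Lemma reach_reachn H a b : reach H a b -> exists k, reachn H k a b.
Proof.
  induction 1. exists 0%nat; apply rn0.
  destruct IHreach as [k Hk]; exists (S k); eapply reachn_cons; eauto.
Qed.

Lemma reachn_reach H k a b : reachn H k a b -> reach H a b.
Proof. induction 1. apply reach_refl. eapply reach_trans; eauto. apply reach_edge; auto. Qed.

Lemma min_ex (P : nat -> Prop) : (exists k, P k) -> exists k, P k /\ forall k', (k' < k)%nat -> ~ P k'.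
Proof.
  intros [k Hk].
  assert (forall N k, (k <= N)%nat -> P k -> exists k, P k /\ forall k', (k' < k)%nat -> ~ P k').
  { induction N; intros k0 Hle Hp.
    - exists k0; split; auto; intros; lia.
    - destruct (classic (exists k', (k' < k0)%nat /\ P k')) as [[k' [Hlt Hp']]|Hno].
      + apply (IHN k'); auto; lia.
      + exists k0; split; auto. intros k' Hl Hp'; apply Hno; eauto. }
  eapply H; eauto.
Qed.

Lemma in_combine_seq (l : list (nat*nat)) s k e :
  In (k,e) (combine (seq s (length l)) l) <-> (s <= k < s + length l)%nat /\ nth (k - s) l (0%nat,0%nat) = e.
Proof.
  revert s; induction l as [|a l IH]; intros s; cbn [length seq combine In].
  - split; [tauto|lia].
  - rewrite IH. split.
    + intros [H|[H1 H2]].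
      * inversion H; subst. rewrite Nat.sub_diag. split; auto; lia.
      * split; [lia|]. replace (k - s)%nat with (S (k - S s)) by lia. auto.
    + intros [H1 H2]. destruct (Nat.eq_dec k s).
      * subst k. rewrite Nat.sub_diag in H2. simpl in H2. subst; auto.
      * right; split; [lia|]. replace (k - s)%nat with (S (k - S s)) in H2 by lia. auto.
Qed.

Lemma in_sel es x keep e : In e (sel_edges es x keep) <->
  exists k, (k < length es)%nat /\ nth k x false = true /\ keep k = true /\ nth k es (0%nat,0%nat) = e.
Proof.
  unfold sel_edges. rewrite in_map_iff. split.
  - intros [[k e'] [He Hin]]. simpl in He; subst e'.
    apply filter_In in Hin. destruct Hin as [Hin Hb]. simpl in Hb.
    apply in_combine_seq in Hin. rewrite Nat.sub_0_r in Hin.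
    apply andb_true_iff in Hb. exists k; intuition.
  - intros [k (Hk & Hx & Hkp & He)]. exists (k, e); split; auto.
    apply filter_In; split.
    + apply in_combine_seq. rewrite Nat.sub_0_r; split; auto; lia.
    + simpl. rewrite Hx, Hkp; auto.
Qed.

Fixpoint upd (l : list bool) (k : nat) (b : bool) : list bool :=
  match l, k with
  | [], _ => []
  | a :: l', O => b :: l'
  | a :: l', S k' => a :: upd l' k' b
  end.

Lemma upd_length l k b : length (upd l k b) = length l.
Proof. revert k; induction l; destruct k; simpl; auto. Qed.

Lemma nth_upd_eq l k b : (k < length l)%nat -> nth k (upd l k b) false = b.
Proof. revert k; induction l; destruct k; simpl; intros; try lia; auto. apply IHl; lia. Qed.

Lemma nth_upd_neq l k b k' : k' <> k -> nth k' (upd l k b) false = nth k' l false.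
Proof.
  revert k k'; induction l; destruct k, k'; simpl; intros; auto; try lia.
Qed.

Section Tree.
Variable n : nat.
Variable es : list (nat*nat).
Hypothesis Hend : forall e, In e es -> (fst e < n)%nat /\ (snd e < n)%nat.

Definition ep i := nth i es (0%nat,0%nat).
Definition Ex x := sel_edges es x (fun _ => true).
Definition Exm x i := sel_edges es x (fun j => negb (j =? i)).
Definition cross x i j := ~ reach (Exm x i) (fst (ep j)) (snd (ep j)).

Lemma ep_lt i : (i < length es)%nat -> (fst (ep i) < n)%nat /\ (snd (ep i) < n)%nat.
Proof. intros; apply Hend; unfold ep; apply nth_In; auto. Qed.

Lemma in_Ex x i : (i < length es)%nat -> nth i x false = true -> In (ep i) (Ex x).
Proof. intros; apply in_sel; exists i; auto. Qed.

Lemma in_Exm x i j : (i < length es)%nat -> nth i x false = true -> i <> j -> In (ep i) (Exm x j).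
Proof. intros; apply in_sel; exists i; repeat split; auto. apply negb_true_iff, Nat.eqb_neq; auto. Qed.

Lemma Ex_split x i e : In e (Ex x) -> In e (Exm x i) \/ e = (fst (ep i), snd (ep i)).
Proof.
  intros H; apply in_sel in H. destruct H as [k (Hk & Hx & _ & He)].
  destruct (Nat.eq_dec k i).
  - subst. right. unfold ep. destruct (nth i es _); auto.
  - left. apply in_sel. exists k; repeat split; auto. apply negb_true_iff, Nat.eqb_neq; auto.
Qed.

Lemma Exm_Ex x i e : In e (Exm x i) -> In e (Ex x).
Proof. intros H; apply in_sel in H; apply in_sel. destruct H as [k (?&?&?&?)]; exists k; auto. Qed.

Lemma reach_ep_edge H i : In (ep i) H -> reach H (fst (ep i)) (snd (ep i)).
Proof. intros; apply reach_edge; left; destruct (ep i); auto. Qed.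

Lemma tree_acyc x i : is_spanning_tree n es x -> (i < length es)%nat -> nth i x false = true ->
  cross x i i.
Proof. intros (_&_&Hac) ? ?; apply Hac; auto. Qed.

Lemma cross_false x i j : (j < length es)%nat -> j <> i -> cross x i j -> nth j x false = false.
Proof.
  intros Hj Hji Hc. destruct (nth j x false) eqn:E; auto. exfalso; apply Hc.
  apply reach_ep_edge, in_Exm; auto.
Qed.

Lemma exch_tree x i j : is_spanning_tree n es x -> (i < length es)%nat -> nth i x false = true ->
  (j < length es)%nat -> j <> i -> cross x i j ->
  is_spanning_tree n es (upd (upd x i false) j true).
Proof.
  intros Htr Hi Hxi Hj Hji Hc.
  pose proof Htr as (Hlen & Hconn & Hac).
  set (y := upd (upd x i false) j true).
  assert (Hxj : nth j x false = false) by (eapply cross_false; eauto).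
  assert (ny : forall k, nth k y false = if k =? j then true else if k =? i then false else nth k x false).
  { intros k. unfold y. destruct (Nat.eqb_spec k j).
    - subst. apply nth_upd_eq. rewrite upd_length; lia.
    - rewrite nth_upd_neq; auto. destruct (Nat.eqb_spec k i).
      + subst; apply nth_upd_eq; lia.
      + rewrite nth_upd_neq; auto. }
  assert (Hsub1 : forall e, In e (Exm x i) -> In e (Ex y)).
  { intros e H; apply in_sel in H; apply in_sel. destruct H as [k (Hk & Hx & Hkp & He)].
    exists k; repeat split; auto. rewrite ny.
    apply negb_true_iff, Nat.eqb_neq in Hkp.
    destruct (Nat.eqb_spec k j). subst; congruence. destruct (Nat.eqb_spec k i); [lia|auto]. }
  assert (Hjy : In (ep j) (Ex y)).
  { apply in_Ex; auto. rewrite ny, Nat.eqb_refl; auto. }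
  assert (Hab : reach (Ex y) (fst (ep i)) (snd (ep i))).
  { destruct (ep_lt j Hj) as [Hp Hq].
    pose proof (Hconn _ _ Hp Hq) as Hpq.
    destruct (reach_decomp _ _ _ _ (Ex_split x i) _ _ Hpq) as [X|[[X Y]|[X Y]]].
    - exfalso; apply Hc; auto.
    - eapply reach_trans. apply reach_sym. eapply reach_mono; [apply Hsub1|apply X].
      eapply reach_trans. apply reach_ep_edge; apply Hjy.
      apply reach_sym. eapply reach_mono; [apply Hsub1|apply Y].
    - eapply reach_trans. eapply reach_mono; [apply Hsub1|apply Y].
      eapply reach_trans. apply reach_sym, reach_ep_edge; apply Hjy.
      eapply reach_mono; [apply Hsub1|apply X]. }
  split; [|split].
  - unfold y; rewrite !upd_length; auto.
  - intros u v Hu Hv. pose proof (Hconn _ _ Hu Hv) as Huv.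
    destruct (reach_decomp _ _ _ _ (Ex_split x i) _ _ Huv) as [X|[[X Y]|[X Y]]].
    + eapply reach_mono; [apply Hsub1|apply X].
    + eapply reach_trans. eapply reach_mono; [apply Hsub1|apply X].
      eapply reach_trans. apply Hab. eapply reach_mono; [apply Hsub1|apply Y].
    + eapply reach_trans. eapply reach_mono; [apply Hsub1|apply X].
      eapply reach_trans. apply reach_sym, Hab. eapply reach_mono; [apply Hsub1|apply Y].
  - intros g Hg Hyg. fold (Exm y g). destruct (Nat.eq_dec g j).
    + subst g. intros R; apply Hc.
      eapply reach_mono; [|apply R].
      intros e H; apply in_sel in H; apply in_sel. destruct H as [k (Hk & Hy & Hkp & He)].
      exists k. rewrite ny in Hy. apply negb_true_iff, Nat.eqb_neq in Hkp.
      destruct (Nat.eqb_spec k j); [lia|]. destruct (Nat.eqb_spec k i); [discriminate|].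
      repeat split; auto; try (apply negb_true_iff, Nat.eqb_neq; auto).
    + assert (Hxg : nth g x false = true /\ g <> i).
      { rewrite ny in Hyg. destruct (Nat.eqb_spec g j); [lia|]. destruct (Nat.eqb_spec g i); [discriminate|]. auto. }
      destruct Hxg as [Hxg Hgi].
      set (H1 := sel_edges es x (fun k => negb (k =? i) && negb (k =? g))).
      assert (HH1 : forall e, In e (Exm y g) -> In e H1 \/ e = (fst (ep j), snd (ep j))).
      { intros e H; apply in_sel in H. destruct H as [k (Hk & Hy & Hkp & He)].
        apply negb_true_iff, Nat.eqb_neq in Hkp. rewrite ny in Hy.
        destruct (Nat.eqb_spec k j).
        - subst. right. unfold ep. destruct (nth j es _); auto.
        - destruct (Nat.eqb_spec k i); [discriminate|]. left. apply in_sel. exists k; repeat split; auto.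
          apply andb_true_iff; split; apply negb_true_iff, Nat.eqb_neq; auto. }
      assert (HH1i : forall e, In e H1 -> In e (Exm x i)).
      { intros e H; apply in_sel in H; apply in_sel. destruct H as [k (Hk & Hx & Hkp & He)].
        exists k; repeat split; auto. apply andb_true_iff in Hkp; tauto. }
      assert (HH1g : forall e, In e H1 -> In e (Exm x g)).
      { intros e H; apply in_sel in H; apply in_sel. destruct H as [k (Hk & Hx & Hkp & He)].
        exists k; repeat split; auto. apply andb_true_iff in Hkp; tauto. }
      assert (Hgi' : reach (Exm x i) (fst (ep g)) (snd (ep g))) by (apply reach_ep_edge, in_Exm; auto).
      intros R.
      destruct (reach_decomp _ _ _ _ HH1 _ _ R) as [X|[[X Y]|[X Y]]].
      * apply (Hac g Hg Hxg). eapply reach_mono; [apply HH1g|apply X].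
      * apply Hc. eapply reach_trans. apply reach_sym. eapply reach_mono; [apply HH1i|apply X].
        eapply reach_trans. apply Hgi'. apply reach_sym. eapply reach_mono; [apply HH1i|apply Y].
      * apply Hc. eapply reach_trans. eapply reach_mono; [apply HH1i|apply Y].
        eapply reach_trans. apply reach_sym, Hgi'. eapply reach_mono; [apply HH1i|apply X].
Qed.

End Tree.

Lemma count_inj (A B : list nat) (R : nat -> nat -> Prop) : NoDup A ->
  (forall i, In i A -> exists j, In j B /\ R i j) ->
  (forall i i' j, In i A -> In i' A -> R i j -> R i' j -> i = i') ->
  (length A <= length B)%nat.
Proof.
  revert B; induction A as [|a A IH]; intros B Hnd Hex Hinj; simpl; [lia|].
  inversion Hnd; subst.
  destruct (Hex a (or_introl eq_refl)) as [j [Hj Ra]].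
  assert (length A <= length (remove Nat.eq_dec j B))%nat.
  { apply IH; auto.
    - intros i Hi. destruct (Hex i (or_intror Hi)) as [j' [Hj' Ri]].
      exists j'; split; auto. apply in_in_remove; auto.
      intros ->. assert (i = a) by (apply (Hinj i a j); simpl; auto). subst; auto.
    - intros; eapply Hinj; simpl; eauto. }
  pose proof (remove_length_lt Nat.eq_dec B j Hj). lia.
Qed.

Fixpoint sumL (l : list nat) (f : nat -> nat) : nat :=
  match l with [] => 0%nat | k :: l' => (f k + sumL l' f)%nat end.

Lemma sumL_app l1 l2 f : sumL (l1 ++ l2) f = (sumL l1 f + sumL l2 f)%nat.
Proof. induction l1; simpl; lia. Qed.

Lemma sumL_plus l f g : sumL l (fun k => f k + g k)%nat = (sumL l f + sumL l g)%nat.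
Proof. induction l; simpl; lia. Qed.

Lemma sumL_ext l f g : (forall k, In k l -> f k = g k) -> sumL l f = sumL l g.
Proof. induction l; simpl; intros H; auto. Qed.

Lemma sumL_le l f g : (forall k, In k l -> (f k <= g k)%nat) -> (sumL l f <= sumL l g)%nat.
Proof. induction l; simpl; intros H; auto. pose proof (H a (or_introl eq_refl)). assert (sumL l f <= sumL l g)%nat by (apply IHl; auto). lia. Qed.

Lemma sumL_swap l1 l2 f : sumL l1 (fun i => sumL l2 (fun t => f i t)) = sumL l2 (fun t => sumL l1 (fun i => f i t)).
Proof.
  induction l1; simpl.
  - induction l2; simpl; auto.
  - rewrite IHl1, <- sumL_plus; auto.
Qed.

Lemma count_eq (p : nat -> bool) l : length (filter p l) = sumL l (fun k => if p k then 1 else 0)%nat.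
Proof. induction l; simpl; auto. destruct (p a); simpl; auto. Qed.

Lemma thr a W : sumL (seq 0 W) (fun t => if t <? a then 1 else 0)%nat = Nat.min a W.
Proof.
  induction W. simpl; lia.
  rewrite seq_S, sumL_app, IHW. simpl. destruct (Nat.ltb_spec W a); lia.
Qed.

Lemma sumL_map l f g : sumL (map g l) f = sumL l (fun k => f (g k)).
Proof. induction l; simpl; auto. Qed.

Lemma weight_sumL ws y : length y = length ws ->
  weight ws y = sumL (seq 0 (length y)) (fun k => if nth k y false then nth k ws 0 else 0)%nat.
Proof.
  revert ws; induction y as [|a y IH]; intros [|b ws] H; simpl in *; try discriminate; auto.
  unfold weight in *. simpl. rewrite IH by lia. rewrite <- seq_shift, sumL_map. auto.
Qed.

Lemma wmax_ge ws k : (nth k ws 0 <= wmax ws)%nat.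
Proof. revert k; induction ws; destruct k; simpl; try lia. specialize (IHws k); lia. Qed.

Section Comb.
Variable n : nat.
Variable es : list (nat*nat).
Variable ws : list nat.
Hypothesis Hend : forall e, In e es -> (fst e < n)%nat /\ (snd e < n)%nat.
Hypothesis Hn : (0 < n)%nat.

Notation m := (length es).
Definition w k := nth k ws 0%nat.
Notation ep := (ep es).
Notation Ex := (Ex es).
Notation Exm := (Exm es).
Notation cross := (cross es).

Definition PS x i j := (j < m)%nat /\ cross x i j /\ forall j', (j' < m)%nat -> cross x i j' -> (w j <= w j')%nat.

Lemma partner_ex x i : exists j, (is_spanning_tree n es x /\ (i < m)%nat /\ nth i x false = true) -> PS x i j.
Proof.
  destruct (classic (is_spanning_tree n es x /\ (i < m)%nat /\ nth i x false = true)) as [(Ht&Hi&Hx)|Hno].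
  2:{ exists 0%nat; tauto. }
  destruct (min_ex (fun k => exists j, (j < m)%nat /\ cross x i j /\ w j = k)) as [k [[j (Hj&Hc&Hw)] Hmin]].
  { exists (w i), i; repeat split; auto. apply (tree_acyc n); auto. }
  exists j; intros _. repeat split; auto. intros j' Hj' Hc'.
  destruct (le_lt_dec (w j) (w j')); auto. exfalso; apply (Hmin (w j')); [lia|]. eauto.
Qed.

Definition partner x i := proj1_sig (constructive_indefinite_description _ (partner_ex x i)).

Lemma partner_spec x i : is_spanning_tree n es x -> (i < m)%nat -> nth i x false = true -> PS x i (partner x i).
Proof. intros. unfold partner. destruct (constructive_indefinite_description _ _); simpl; auto. Qed.

Definition cw x i := w (partner x i).

Lemma cw_le x i : is_spanning_tree n es x -> (i < m)%nat -> nth i x false = true -> (cw x i <= w i)%nat.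
Proof. intros. destruct (partner_spec x i) as (_&_&H2); auto. apply H2; auto. apply (tree_acyc n); auto. Qed.

Definition Lt t := sel_edges es (repeat true m) (fun k => w k <=? t).

Lemma in_Lt t k : (k < m)%nat -> (w k <= t)%nat -> In (ep k) (Lt t).
Proof.
  intros. apply in_sel. exists k; repeat split; auto.
  - apply repeat_spec with (n := m). rewrite <- (repeat_length true m) in H. apply nth_In; auto.
  - apply Nat.leb_le; auto.
Qed.

Lemma in_Lt_inv t e : In e (Lt t) -> exists k, (k < m)%nat /\ (w k <= t)%nat /\ ep k = e.
Proof. intros H; apply in_sel in H. destruct H as [k (?&?&?&?)]. exists k; repeat split; auto. apply Nat.leb_le; auto. Qed.

Definition child x i := if excluded_middle_informative (reach (Exm x i) 0 (fst (ep i))) then snd (ep i) else fst (ep i).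
Definition par x i := if excluded_middle_informative (reach (Exm x i) 0 (fst (ep i))) then fst (ep i) else snd (ep i).

Lemma child_spec x i : is_spanning_tree n es x -> (i < m)%nat -> nth i x false = true ->
  ~ reach (Exm x i) (child x i) 0 /\ reach (Exm x i) 0 (par x i) /\
  (ep i = (par x i, child x i) \/ ep i = (child x i, par x i)) /\ (child x i < n)%nat.
Proof.
  intros Ht Hi Hx. pose proof (tree_acyc _ _ _ _ Ht Hi Hx) as Hc. unfold cross in Hc.
  destruct (ep_lt _ _ Hend i Hi) as [Ha Hb].
  unfold child, par; destruct (excluded_middle_informative _) as [R|R].
  - repeat split; auto.
    + intros R2. apply Hc. eapply reach_trans. apply reach_sym; eauto. apply reach_sym; auto.
    + left; destruct (ep i); auto.
  - repeat split; auto.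
    + intros R2; apply R, reach_sym; auto.
    + destruct Ht as (_&Hconn&_). pose proof (Hconn 0%nat _ Hn Hb) as R0.
      destruct (reach_decomp _ _ _ _ (Ex_split es x i) _ _ R0) as [X|[[X Y]|[X Y]]]; auto.
      contradiction.
    + right; destruct (ep i); auto.
Qed.

Definition Bprop x i t := forall j', (j' < m)%nat -> cross x i j' -> (t < w j')%nat.

Lemma closure x i t : is_spanning_tree n es x -> (i < m)%nat -> nth i x false = true -> Bprop x i t ->
  forall z z', reach (Exm x i) (child x i) z -> reach (Lt t) z z' -> reach (Exm x i) (child x i) z'.
Proof.
  intros Ht Hi Hx HB z z' Hz R. revert Hz. induction R as [u|u v w' Huv R IH]; intros Hz; auto.
  apply IH. destruct (classic (reach (Exm x i) (child x i) v)) as [|Hnv]; auto. exfalso.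
  assert (Hk : exists k, (k < m)%nat /\ (w k <= t)%nat /\ (ep k = (u,v) \/ ep k = (v,u))).
  { destruct Huv as [H|H]; apply in_Lt_inv in H; destruct H as [k (?&?&?)]; exists k; auto. }
  destruct Hk as [k (Hk & Hwk & Hek)].
  assert (Hcr : cross x i k).
  { intros Rk. apply Hnv. destruct Hek as [E|E]; rewrite E in Rk; simpl in Rk.
    - eapply reach_trans; eauto.
    - eapply reach_trans; eauto. apply reach_sym; auto. }
  specialize (HB k Hk Hcr). lia.
Qed.

Lemma child_inj x i i' t : is_spanning_tree n es x ->
  (i < m)%nat -> nth i x false = true -> Bprop x i t ->
  (i' < m)%nat -> nth i' x false = true -> Bprop x i' t ->
  reach (Lt t) (child x i) (child x i') -> i = i'.
Proof.
  intros Ht Hi Hx HB Hi' Hx' HB' R.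
  destruct (Nat.eq_dec i i') as [|Hne]; auto. exfalso.
  destruct (child_spec x i Ht Hi Hx) as (C1 & C2 & C3 & _).
  destruct (child_spec x i' Ht Hi' Hx') as (C1' & C2' & C3' & _).
  set (c := child x i) in *. set (c' := child x i') in *. set (pa := par x i) in *. set (pa' := par x i') in *.
  assert (S1 : reach (Exm x i) c c') by (eapply closure; eauto; apply reach_refl).
  assert (S2 : reach (Exm x i') c' c) by (eapply closure; eauto; [apply reach_refl| apply reach_sym; auto]).
  assert (Ei' : In (ep i') (Exm x i)) by (apply in_Exm; auto).
  assert (Ei : In (ep i) (Exm x i')) by (apply in_Exm; auto).
  assert (Ep1 : reach (Exm x i) c (fst (ep i')) /\ reach (Exm x i) c (snd (ep i'))).
  { destruct C3' as [E|E]; rewrite E in Ei'; rewrite E; simpl; split; auto;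
      eapply reach_trans; eauto; apply reach_edge; auto. }
  set (H1 := sel_edges es x (fun k => negb (k =? i) && negb (k =? i'))).
  assert (HH : forall e, In e (Exm x i) -> In e H1 \/ e = (fst (ep i'), snd (ep i'))).
  { intros e H; apply in_sel in H. destruct H as [k (Hk & Hxk & Hkp & He)].
    destruct (Nat.eq_dec k i').
    - subst. right. unfold ep. destruct (nth i' es _); auto.
    - left. apply in_sel. exists k; repeat split; auto. rewrite Hkp; simpl. apply negb_true_iff, Nat.eqb_neq; auto. }
  assert (HH1 : forall e, In e H1 -> In e (Exm x i)).
  { intros e H; apply in_sel in H; apply in_sel. destruct H as [k (?&?&Hkp&?)]. exists k; repeat split; auto. apply andb_true_iff in Hkp; tauto. }
  assert (HH2 : forall e, In e H1 -> In e (Exm x i')).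
  { intros e H; apply in_sel in H; apply in_sel. destruct H as [k (?&?&Hkp&?)]. exists k; repeat split; auto. apply andb_true_iff in Hkp; tauto. }
  assert (R0 : reach (Exm x i') 0 pa).
  { destruct (reach_decomp _ _ _ _ HH _ _ C2) as [X|[[X Y]|[X Y]]].
    - eapply reach_mono; eauto.
    - exfalso; apply C1. eapply reach_trans. apply (proj1 Ep1). apply reach_sym. eapply reach_mono; eauto.
    - exfalso; apply C1. eapply reach_trans. apply (proj2 Ep1). apply reach_sym. eapply reach_mono; eauto. }
  apply C1'. eapply reach_trans. apply S2. eapply reach_trans. 2: apply reach_sym, R0.
  apply reach_edge. destruct C3 as [E|E]; rewrite E in Ei; auto.
Qed.

Definition Rel x y t i j := exists z z' k, reach (Lt t) (child x i) z /\
  (forall k', (k' < S k)%nat -> ~ reachn (Ex y) k' 0 z) /\ reachn (Ex y) k 0 z' /\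
  (ep j = (z',z) \/ ep j = (z,z')).

Lemma inj_exists x y t i : is_spanning_tree n es x ->
  (forall u v, (u < n)%nat -> (v < n)%nat -> reach (Ex y) u v) ->
  (i < m)%nat -> nth i x false = true -> Bprop x i t ->
  exists j, ((j < m)%nat /\ nth j y false = true /\ (t < w j)%nat) /\ Rel x y t i j.
Proof.
  intros Ht Hy Hi Hx HB.
  destruct (child_spec x i Ht Hi Hx) as (C1 & _ & _ & Cn).
  set (c := child x i) in *.
  destruct (min_ex (fun k => exists z, reach (Lt t) c z /\ reachn (Ex y) k 0 z)) as [k0 [[z0 [Hz0 Rz0]] Hmin]].
  { destruct (reach_reachn _ _ _ (Hy 0%nat c Hn Cn)) as [k Hk]. exists k, c; split; auto. apply reach_refl. }
  destruct k0 as [|k1].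
  - inversion Rz0; subst. exfalso. apply C1. eapply closure; eauto. apply reach_refl.
  - inversion Rz0 as [|? ? z' ? Rz' Hadj]; subst.
    assert (Hj : exists j, (j < m)%nat /\ nth j y false = true /\ (ep j = (z',z0) \/ ep j = (z0,z'))).
    { destruct Hadj as [H|H]; apply in_sel in H; destruct H as [j (?&?&?&?)]; exists j; auto. }
    destruct Hj as [j (Hjm & Hyj & Hej)].
    exists j. split; [repeat split; auto|].
    + destruct (le_lt_dec (w j) t) as [Hl|]; auto. exfalso.
      apply (Hmin k1); [lia|]. exists z'. split; auto.
      eapply reach_trans; eauto. apply reach_edge.
      pose proof (in_Lt t j Hjm Hl). destruct Hej as [E|E]; rewrite E in H; auto.
    + exists z0, z', k1. repeat split; auto.
      intros k' Hk' Rk. apply (Hmin k'); auto. eauto.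
Qed.

Lemma Rel_inj x y t i i' j : Rel x y t i j -> Rel x y t i' j -> reach (Lt t) (child x i) (child x i').
Proof.
  intros (z1 & z1' & k1 & A1 & B1 & C1 & D1) (z2 & z2' & k2 & A2 & B2 & C2 & D2).
  assert (Hs : z1 = z2 \/ (z1 = z2' /\ z2 = z1')).
  { destruct D1 as [E1|E1]; destruct D2 as [E2|E2]; rewrite E1 in E2; inversion E2; subst; auto. }
  destruct Hs as [->|[-> ->]].
  - eapply reach_trans; eauto. apply reach_sym; auto.
  - exfalso. destruct (lt_dec k1 (S k2)) as [L|L].
    + apply (B2 k1 L C1).
    + destruct (lt_dec k2 (S k1)) as [L'|L']. apply (B1 k2 L' C2). lia.
Qed.

Definition Bset x t := filter (fun k => nth k x false && (t <? cw x k)) (seq 0 m).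
Definition Hset y t := filter (fun k => nth k y false && (t <? w k)) (seq 0 m).

Lemma count_le x y t : is_spanning_tree n es x ->
  (forall u v, (u < n)%nat -> (v < n)%nat -> reach (Ex y) u v) ->
  (length (Bset x t) <= length (Hset y t))%nat.
Proof.
  intros Ht Hy.
  assert (HB : forall i, In i (Bset x t) -> (i < m)%nat /\ nth i x false = true /\ Bprop x i t).
  { intros i Hin. unfold Bset in Hin. apply filter_In in Hin. destruct Hin as [Hin Hb].
    apply in_seq in Hin. apply andb_true_iff in Hb. destruct Hb as [Hb1 Hb2]. apply Nat.ltb_lt in Hb2.
    repeat split; auto; try lia. intros j' Hj' Hc.
    destruct (partner_spec x i) as (_&_&P); auto; try lia. specialize (P j' Hj' Hc). unfold cw in Hb2. lia. }
  apply count_inj with (R := Rel x y t).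
  - apply NoDup_filter, seq_NoDup.
  - intros i Hin. destruct (HB i Hin) as (?&?&?).
    destruct (inj_exists x y t i) as [j [(Hj1&Hj2&Hj3) HR]]; auto.
    exists j; split; auto. apply filter_In; split. apply in_seq; lia.
    rewrite Hj2; simpl. apply Nat.ltb_lt; auto.
  - intros i i' j Hi Hi' R R'. destruct (HB i Hi) as (?&?&?). destruct (HB i' Hi') as (?&?&?).
    eapply child_inj; eauto. eapply Rel_inj; eauto.
Qed.

Lemma comb_main x y : is_spanning_tree n es x -> is_spanning_tree n es y -> length ws = m ->
  (sumL (seq 0 m) (fun k => if nth k x false then cw x k else 0) <= weight ws y)%nat.
Proof.
  intros Ht Hty Hws. pose proof Hty as (Hly & Hy & _).
  rewrite weight_sumL by congruence. rewrite Hly.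
  set (W := wmax ws).
  transitivity (sumL (seq 0 m) (fun k => sumL (seq 0 W) (fun t => if nth k x false && (t <? cw x k) then 1 else 0)))%nat.
  { apply Nat.eq_le_incl, sumL_ext. intros k Hk. apply in_seq in Hk.
    destruct (nth k x false) eqn:E; simpl.
    - rewrite thr. pose proof (cw_le x k Ht (ltac:(lia)) E). pose proof (wmax_ge ws k). unfold w in *. lia.
    - clear. induction (seq 0 W); simpl; auto. }
  rewrite sumL_swap.
  transitivity (sumL (seq 0 W) (fun t => sumL (seq 0 m) (fun k => if nth k y false && (t <? w k) then 1 else 0)))%nat.
  { apply sumL_le. intros t _. rewrite <- !count_eq. apply count_le; auto. }
  rewrite <- sumL_swap. apply Nat.eq_le_incl, sumL_ext. intros k Hk.
  destruct (nth k y false) eqn:E; simpl.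
  - rewrite thr. pose proof (wmax_ge ws k). unfold w in *. lia.
  - clear. induction (seq 0 W); simpl; auto.
Qed.

Lemma gain_main x y : is_spanning_tree n es x -> is_spanning_tree n es y -> length ws = m ->
  (weight ws x <= sumL (seq 0 m) (fun k => if nth k x false then w k - cw x k else 0) + weight ws y)%nat.
Proof.
  intros Ht Hty Hws. pose proof (comb_main x y Ht Hty Hws).
  pose proof Ht as (Hlx & _).
  rewrite weight_sumL by congruence. rewrite Hlx.
  assert (sumL (seq 0 m) (fun k => if nth k x false then nth k ws 0 else 0) =
          sumL (seq 0 m) (fun k => if nth k x false then w k - cw x k else 0) +
          sumL (seq 0 m) (fun k => if nth k x false then cw x k else 0))%nat.
  { rewrite <- sumL_plus. apply sumL_ext. intros k Hk; apply in_seq in Hk.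
    destruct (nth k x false) eqn:E; auto. pose proof (cw_le x k Ht ltac:(lia) E). unfold w in *; lia. }
  lia.
Qed.

End Comb.
Open Scope R_scope.

Lemma Rsum_nil {A} (f : A -> R) : Rsum [] f = 0. Proof. reflexivity. Qed.
Lemma Rsum_cons {A} a l (f : A -> R) : Rsum (a :: l) f = f a + Rsum l f. Proof. reflexivity. Qed.

Lemma Rsum_ext {A} (l : list A) f g : (forall a, In a l -> f a = g a) -> Rsum l f = Rsum l g.
Proof. induction l; intros H; auto. rewrite !Rsum_cons, H by (simpl; auto). rewrite IHl; auto. intros; apply H; simpl; auto. Qed.

Lemma Rsum_app {A} (l1 l2 : list A) f : Rsum (l1 ++ l2) f = Rsum l1 f + Rsum l2 f.
Proof. induction l1; simpl; [unfold Rsum; simpl; ring|]. rewrite !Rsum_cons, IHl1; ring. Qed.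

Lemma Rsum_map {A B} (l : list A) (g : A -> B) f : Rsum (map g l) f = Rsum l (fun a => f (g a)).
Proof. induction l; auto. simpl. rewrite !Rsum_cons, IHl; auto. Qed.

Lemma Rsum_plus {A} (l : list A) f g : Rsum l (fun a => f a + g a) = Rsum l f + Rsum l g.
Proof. induction l; [unfold Rsum; simpl; ring|]. rewrite !Rsum_cons, IHl; ring. Qed.

Lemma Rsum_minus {A} (l : list A) f g : Rsum l (fun a => f a - g a) = Rsum l f - Rsum l g.
Proof. induction l; [unfold Rsum; simpl; ring|]. rewrite !Rsum_cons, IHl; ring. Qed.

Lemma Rsum_mult_l {A} (l : list A) c f : Rsum l (fun a => c * f a) = c * Rsum l f.
Proof. induction l; [unfold Rsum; simpl; ring|]. rewrite !Rsum_cons, IHl; ring. Qed.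

Lemma Rsum_mult_r {A} (l : list A) c f : Rsum l (fun a => f a * c) = Rsum l f * c.
Proof. induction l; [unfold Rsum; simpl; ring|]. rewrite !Rsum_cons, IHl; ring. Qed.

Lemma Rsum_le {A} (l : list A) f g : (forall a, In a l -> f a <= g a) -> Rsum l f <= Rsum l g.
Proof. induction l; intros H; [unfold Rsum; simpl; lra|]. rewrite !Rsum_cons.
  assert (Rsum l f <= Rsum l g) by (apply IHl; intros; apply H; simpl; auto).
  pose proof (H a (or_introl eq_refl)). lra. Qed.

Lemma Rsum_nonneg {A} (l : list A) f : (forall a, In a l -> 0 <= f a) -> 0 <= Rsum l f.
Proof. intros H. replace 0 with (Rsum l (fun _ => 0)). apply Rsum_le; auto.
  induction l; auto. rewrite Rsum_cons, IHl; [ring|]. intros; apply H; simpl; auto. Qed.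

Lemma Rsum_zero {A} (l : list A) f : (forall a, In a l -> f a = 0) -> Rsum l f = 0.
Proof. induction l; intros H; auto. rewrite Rsum_cons, H by (simpl; auto). rewrite IHl; [ring|]. intros; apply H; simpl; auto. Qed.

Lemma Rsum_swap {A B} (l1 : list A) (l2 : list B) f :
  Rsum l1 (fun a => Rsum l2 (fun b => f a b)) = Rsum l2 (fun b => Rsum l1 (fun a => f a b)).
Proof.
  induction l1. rewrite Rsum_nil. symmetry; apply Rsum_zero; auto.
  rewrite Rsum_cons, IHl1, <- Rsum_plus. apply Rsum_ext; intros; rewrite Rsum_cons; auto.
Qed.

Lemma Rsum_perm {A} (l1 l2 : list A) f : Permutation l1 l2 -> Rsum l1 f = Rsum l2 f.
Proof. induction 1; auto; rewrite ?Rsum_cons; try congruence. unfold Rsum; simpl; ring. Qed.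

Lemma Rsum_subset {A} (L M : list A) f : NoDup L -> NoDup M -> incl L M -> (forall a, In a M -> 0 <= f a) ->
  Rsum L f <= Rsum M f.
Proof.
  revert M; induction L as [|a L IH]; intros M HL HM Hinc Hf.
  - rewrite Rsum_nil; apply Rsum_nonneg; auto.
  - assert (Ha : In a M) by (apply Hinc; simpl; auto).
    destruct (in_split _ _ Ha) as (M1 & M2 & ->).
    rewrite (Rsum_perm (M1 ++ a :: M2) (a :: M1 ++ M2)) by (apply Permutation_sym, Permutation_middle).
    rewrite !Rsum_cons. inversion HL; subst.
    assert (HM' : NoDup (M1 ++ M2)) by (eapply NoDup_remove_1; eauto).
    assert (Rsum L f <= Rsum (M1 ++ M2) f); [|lra].
    apply IH; auto.
    + intros b Hb. assert (Hb' : In b (M1 ++ a :: M2)) by (apply Hinc; simpl; auto).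
      apply in_app_iff in Hb'. apply in_app_iff. simpl in Hb'. destruct Hb' as [|[->|]]; auto. contradiction.
    + intros b Hb; apply Hf. apply in_app_iff in Hb; apply in_app_iff; simpl; tauto.
Qed.

Lemma ind_true (P : Prop) : P -> indicator P = 1.
Proof. unfold indicator; destruct (excluded_middle_informative P); tauto. Qed.
Lemma ind_false (P : Prop) : ~ P -> indicator P = 0.
Proof. unfold indicator; destruct (excluded_middle_informative P); tauto. Qed.
Lemma ind_bounds (P : Prop) : 0 <= indicator P <= 1.
Proof. unfold indicator; destruct (excluded_middle_informative P); lra. Qed.

Lemma Rsum_ind {A} (L : list A) a g : NoDup L -> In a L -> Rsum L (fun z => indicator (a = z) * g z) = g a.
Proof.
  induction L as [|b L IH]; intros Hnd Hin; [destruct Hin|].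
  inversion Hnd; subst. rewrite Rsum_cons. destruct Hin as [->|Hin].
  - rewrite ind_true, Rsum_zero; auto; [ring|]. intros c Hc. rewrite ind_false; [ring|]. intros ->; auto.
  - rewrite ind_false, IH; auto; [ring|]. intros ->; auto.
Qed.

Lemma Rsum_INR l f : Rsum l (fun k => INR (f k)) = INR (sumL l f).
Proof. induction l; simpl; auto. rewrite Rsum_cons, IHl, plus_INR; auto. Qed.

Lemma sumL_filter (p : nat -> bool) l f : sumL (filter p l) f = sumL l (fun k => if p k then f k else 0%nat).
Proof. induction l; simpl; auto. destruct (p a); simpl; auto. Qed.

Lemma bits_in k y : In y (bitstrings k) <-> length y = k.
Proof.
  revert y; induction k; intros y; simpl.
  - split. intros [<-|[]]; auto. destruct y; simpl; try discriminate; auto.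
  - rewrite in_app_iff, !in_map_iff. split.
    + intros [[y' [<- H]]|[y' [<- H]]]; simpl; apply IHk in H; auto.
    + destruct y as [|b y]; simpl; intros H; try discriminate. injection H; intros H'.
      apply IHk in H'. destruct b; [right|left]; eauto.
Qed.

Lemma bits_nodup k : NoDup (bitstrings k).
Proof.
  induction k; simpl. constructor; auto. constructor.
  apply NoDup_app.
  - apply NoDup_map_NoDup_ForallPairs; auto. intros a b _ _ H; injection H; auto.
  - apply NoDup_map_NoDup_ForallPairs; auto. intros a b _ _ H; injection H; auto.
  - intros y H1 H2. apply in_map_iff in H1, H2. destruct H1 as [? [<- _]]. destruct H2 as [? [H _]]. discriminate.
Qed.

Definition mfac (M : nat) (p : bool * bool) : R := if Bool.eqb (fst p) (snd p) then 1 - / INR M else / INR M.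

Lemma mut_cons M a x b y : mut_prob M (a :: x) (b :: y) = mfac M (a,b) * mut_prob M x y.
Proof. reflexivity. Qed.

Lemma mut_nonneg M x y : (1 <= M)%nat -> 0 <= mut_prob M x y.
Proof.
  intros HM. assert (0 < INR M) by (apply lt_0_INR; lia).
  assert (/ INR M <= 1). { rewrite <- Rinv_1. apply Rinv_le_contravar; [lra|]. apply (le_INR 1); auto. }
  assert (0 < / INR M) by (apply Rinv_0_lt_compat; auto).
  revert y; induction x; destruct y; try (unfold mut_prob; simpl; lra).
  rewrite mut_cons. apply Rmult_le_pos; auto. unfold mfac; destruct (Bool.eqb _ _); simpl; lra.
Qed.

Lemma mut_sum M k x : length x = k -> Rsum (bitstrings k) (fun y => mut_prob M x y) = 1.
Proof.
  revert x; induction k; intros x Hx.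
  - destruct x; try discriminate. simpl; unfold Rsum, mut_prob; simpl; ring.
  - destruct x as [|a x]; try discriminate. simpl. rewrite Rsum_app, !Rsum_map.
    injection Hx; intros Hx'.
    rewrite (Rsum_ext _ _ (fun y => mfac M (a,false) * mut_prob M x y)) by (intros; apply mut_cons).
    rewrite (Rsum_ext (bitstrings k) (fun y => mut_prob M (a :: x) (true :: y)) (fun y => mfac M (a,true) * mut_prob M x y)) by (intros; apply mut_cons).
    rewrite !Rsum_mult_l, IHk by auto. unfold mfac; destruct a; simpl; ring.
Qed.

Fixpoint ham (x y : list bool) : nat :=
  match x, y with
  | a :: x', b :: y' => ((if Bool.eqb a b then 0 else 1) + ham x' y')%nat
  | _, _ => 0%nat
  end.

Lemma ham_le x y : (ham x y <= length x)%nat.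
Proof. revert y; induction x; destruct y; simpl; try lia. specialize (IHx y). destruct (Bool.eqb _ _); lia. Qed.

Lemma mut_ham M x y : length x = length y ->
  mut_prob M x y = (/ INR M) ^ (ham x y) * (1 - / INR M) ^ (length x - ham x y).
Proof.
  revert y; induction x as [|a x IH]; intros [|b y] H; simpl in H; try discriminate.
  - unfold mut_prob; simpl; ring.
  - rewrite mut_cons, IH by lia. pose proof (ham_le x y). unfold mfac. cbn [fst snd ham length].
    destruct (Bool.eqb a b).
    + rewrite Nat.add_0_l. replace (S (length x) - ham x y)%nat with (S (length x - ham x y)) by lia.
      rewrite <- tech_pow_Rmult; ring.
    + replace (S (length x) - (1 + ham x y))%nat with (length x - ham x y)%nat by lia.
      replace (1 + ham x y)%nat with (S (ham x y)) by lia. rewrite <- tech_pow_Rmult; ring.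
Qed.

Lemma ham_refl x : ham x x = 0%nat.
Proof. induction x; simpl; auto. rewrite eqb_reflx; auto. Qed.

Lemma ham_upd x y k v : length x = length y -> (k < length y)%nat ->
  (ham x (upd y k v) + (if Bool.eqb (nth k x false) (nth k y false) then 0 else 1) =
   ham x y + (if Bool.eqb (nth k x false) v then 0 else 1))%nat.
Proof.
  revert y k; induction x as [|a x IH]; intros [|b y] k H Hk; simpl in *; try lia.
  destruct k; simpl.
  - lia.
  - specialize (IH y k ltac:(lia) ltac:(lia)). lia.
Qed.

Lemma ham_two x i j : (i < length x)%nat -> (j < length x)%nat -> i <> j ->
  nth i x false = true -> nth j x false = false -> ham x (upd (upd x i false) j true) = 2%nat.
Proof.
  intros Hi Hj Hij Hxi Hxj.
  pose proof (ham_upd x x i false eq_refl Hi) as A. rewrite ham_refl, Hxi in A. simpl in A.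
  pose proof (ham_upd x (upd x i false) j true ltac:(rewrite upd_length; auto) ltac:(rewrite upd_length; auto)) as B.
  rewrite nth_upd_neq in B by auto. rewrite Hxj in B. simpl in B. lia.
Qed.

Lemma weight_upd_f ws x k : length x = length ws -> (k < length x)%nat -> nth k x false = true ->
  (weight ws (upd x k false) + nth k ws 0 = weight ws x)%nat.
Proof.
  revert ws k; induction x as [|a x IH]; intros [|b ws] k H Hk Hx; simpl in *; try lia.
  unfold weight in *; destruct k; simpl in *.
  - subst; lia.
  - specialize (IH ws k ltac:(lia) ltac:(lia) Hx). lia.
Qed.

Lemma weight_upd_t ws x k : length x = length ws -> (k < length x)%nat -> nth k x false = false ->
  (weight ws (upd x k true) = weight ws x + nth k ws 0)%nat.
Proof.
  revert ws k; induction x as [|a x IH]; intros [|b ws] k H Hk Hx; simpl in *; try lia.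
  unfold weight in *; destruct k; simpl in *.
  - subst; lia.
  - specialize (IH ws k ltac:(lia) ltac:(lia) Hx). lia.
Qed.

Lemma weight_bound ws x : (weight ws x <= length ws * wmax ws)%nat.
Proof.
  revert x; induction ws as [|b ws IH]; intros [|a x]; unfold weight in *; simpl; try lia.
  specialize (IH x). destruct a; simpl; nia.
Qed.

Lemma exp_pow a k : exp a ^ k = exp (INR k * a).
Proof. induction k. simpl; rewrite Rmult_0_l, exp_0; auto. rewrite S_INR. simpl. rewrite IHk, <- exp_plus. f_equal; ring. Qed.

Lemma flip2_bound M : (2 <= M)%nat ->
  / (exp 1 * INR M ^ 2) <= (/ INR M) ^ 2 * (1 - / INR M) ^ (M - 2).
Proof.
  intros HM. assert (HM' : 2 <= INR M) by (apply (le_INR 2); auto).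
  set (q := 1 - / INR M).
  assert (Hq0 : 0 <= q) by (unfold q; assert (/ INR M <= /2) by (apply Rinv_le_contravar; lra); lra).
  assert (Hq1 : q <= 1) by (unfold q; assert (0 < / INR M) by (apply Rinv_0_lt_compat; lra); lra).
  assert (HqE : exp (- / (INR M - 1)) <= q).
  { pose proof (exp_ineq1_le (/ (INR M - 1))) as E.
    assert (Hpos : 0 < exp (/ (INR M - 1))) by apply exp_pos.
    rewrite exp_Ropp. unfold q.
    replace (1 - / INR M) with (/ (1 + / (INR M - 1))) by (field; lra).
    apply Rinv_le_contravar; auto. assert (0 < / (INR M - 1)) by (apply Rinv_0_lt_compat; lra). lra. }
  assert (Hpow : / exp 1 <= q ^ (M - 2)).
  { apply Rle_trans with (q ^ (M - 1)).
    - apply Rle_trans with (exp (- / (INR M - 1)) ^ (M - 1)).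
      + rewrite exp_pow, <- exp_Ropp. rewrite minus_INR by lia. simpl INR. right; f_equal. field. lra.
      + apply pow_incr; split; auto. left; apply exp_pos.
    - replace (M - 1)%nat with (S (M - 2)) by lia. simpl. rewrite <- (Rmult_1_l (q ^ (M-2))) at 2.
      apply Rmult_le_compat_r; auto. apply pow_le; auto. }
  rewrite Rinv_mult. rewrite Rmult_comm. rewrite pow_inv.
  apply Rmult_le_compat_l; auto. left; apply Rinv_0_lt_compat, pow_lt; lra.
Qed.

Section Chain.
Variable n : nat.
Variable es : list (nat*nat).
Variable ws : list nat.
Variable x0 ystar : list bool.
Hypothesis Hend : forall e, In e es -> (fst e < n)%nat /\ (snd e < n)%nat.
Hypothesis Hn : (0 < n)%nat.
Hypothesis Hws : length ws = length es.
Hypothesis Hm : (1 <= length es)%nat.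
Hypothesis Hx0 : is_spanning_tree n es x0.
Hypothesis Hmst : is_mst n es ws ystar.

Notation m := (length es).
Notation bs := (bitstrings (length es)).
Notation tree := (is_spanning_tree n es).
Notation mst := (is_mst n es ws).
Notation sel := (ea_select n es ws).
Notation mut := (mut_prob (length es)).
Notation surv := (surv n es ws x0).

Definition Phi z := INR (weight ws z - weight ws ystar).
Definition delta := / (exp 1 * INR m ^ 2).

Lemma sel_cases x y : (sel x y = y /\ tree y /\ (weight ws y <= weight ws x)%nat) \/ sel x y = x.
Proof. unfold ea_select. destruct (excluded_middle_informative _); tauto. Qed.

Lemma sel_tree x y : tree x -> tree (sel x y).
Proof. intros; destruct (sel_cases x y) as [(->&?&?)| ->]; auto. Qed.

Lemma sel_w x y : (weight ws (sel x y) <= weight ws x)%nat.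
Proof. destruct (sel_cases x y) as [(->&?&?)| ->]; auto. Qed.

Lemma sel_bs x y : In x bs -> In y bs -> In (sel x y) bs.
Proof. intros; destruct (sel_cases x y) as [(->&?&?)| ->]; auto. Qed.

Lemma Phi_nonneg z : 0 <= Phi z.
Proof. apply pos_INR. Qed.

Lemma Phi_sel_le x y : Phi (sel x y) <= Phi x.
Proof. unfold Phi. apply le_INR. pose proof (sel_w x y). lia. Qed.

Lemma Phi_ge1 z : tree z -> ~ mst z -> 1 <= Phi z.
Proof.
  intros Ht Hnm. unfold is_mst in Hnm.
  assert (exists y, tree y /\ (weight ws y < weight ws z)%nat) as [y [Hy Hlt]].
  { apply NNPP; intros Hno. apply Hnm; split; auto. intros y Hy.
    destruct (le_lt_dec (weight ws z) (weight ws y)); auto. exfalso; apply Hno; eauto. }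
  destruct Hmst as [_ Hmin]. specialize (Hmin y Hy).
  unfold Phi. apply (le_INR 1). lia.
Qed.

Lemma surv_S t z : surv (S t) z = indicator (~ mst z) *
  Rsum bs (fun x => surv t x * Rsum bs (fun y => mut x y * indicator (sel x y = z))).
Proof. reflexivity. Qed.

Lemma mut_nn x y : 0 <= mut x y.
Proof. apply mut_nonneg; auto. Qed.

Lemma surv_nonneg t z : 0 <= surv t z.
Proof.
  revert z; induction t; intros z.
  - simpl. apply ind_bounds.
  - rewrite surv_S. apply Rmult_le_pos. apply ind_bounds.
    apply Rsum_nonneg; intros. apply Rmult_le_pos; auto.
    apply Rsum_nonneg; intros. apply Rmult_le_pos. apply mut_nn. apply ind_bounds.
Qed.

Lemma surv_tree t z : ~ tree z -> surv t z = 0.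
Proof.
  revert z; induction t; intros z Hz.
  - simpl. apply ind_false. intros [-> _]; auto.
  - rewrite surv_S. rewrite Rsum_zero; [ring|]. intros x _.
    destruct (classic (tree x)) as [Hx|Hx].
    + rewrite Rsum_zero; [ring|]. intros y _. rewrite ind_false; [ring|].
      intros E; apply Hz; rewrite <- E; apply sel_tree; auto.
    + rewrite IHt; auto; ring.
Qed.

Lemma surv_pos t z : surv t z <> 0 -> tree z /\ ~ mst z.
Proof.
  intros H. split.
  - apply NNPP; intros Hn'; apply H, surv_tree; auto.
  - destruct t.
    + simpl in H. intros Hm'. apply H, ind_false. tauto.
    + rewrite surv_S in H. intros Hm'. apply H. rewrite ind_false; [ring|tauto].
Qed.

Lemma step_le t g : (forall z, 0 <= g z) ->
  Rsum bs (fun z => surv (S t) z * g z) <=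
  Rsum bs (fun x => surv t x * Rsum bs (fun y => mut x y * g (sel x y))).
Proof.
  intros Hg.
  set (S := fun z => Rsum bs (fun x => surv t x * Rsum bs (fun y => mut x y * indicator (sel x y = z)))).
  apply Rle_trans with (Rsum bs (fun z => S z * g z)).
  { apply Rsum_le; intros z _. rewrite surv_S. fold (S z).
    assert (0 <= S z).
    { apply Rsum_nonneg; intros. apply Rmult_le_pos; [apply surv_nonneg|].
      apply Rsum_nonneg; intros. apply Rmult_le_pos. apply mut_nn. apply ind_bounds. }
    pose proof (ind_bounds (~ mst z)). pose proof (Hg z).
    rewrite Rmult_assoc. rewrite <- (Rmult_1_l (S z * g z)) at 2.
    apply Rmult_le_compat_r; [apply Rmult_le_pos|]; tauto. }
  right.
  transitivity (Rsum bs (fun z => Rsum bs (fun x => surv t x *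
     Rsum bs (fun y => mut x y * (indicator (sel x y = z) * g z))))).
  { apply Rsum_ext; intros z _. unfold S. rewrite <- Rsum_mult_r. apply Rsum_ext; intros x _.
    rewrite Rmult_assoc, <- Rsum_mult_r. f_equal. apply Rsum_ext; intros; ring. }
  rewrite Rsum_swap. apply Rsum_ext; intros x Hx.
  rewrite Rsum_mult_l. f_equal. rewrite Rsum_swap. apply Rsum_ext; intros y Hy.
  rewrite Rsum_mult_l. f_equal. apply Rsum_ind. apply bits_nodup. apply sel_bs; auto.
Qed.

Lemma m2 : 0 < exp 1 * INR m ^ 2.
Proof. apply Rmult_lt_0_compat. apply exp_pos. apply pow_lt. apply lt_0_INR; lia. Qed.

Lemma delta_bounds : 0 < delta <= 1.
Proof.
  unfold delta. pose proof m2. split. apply Rinv_0_lt_compat; auto.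
  pose proof (exp_ineq1_le 1). assert (1 <= INR m) by (apply (le_INR 1); auto).
  assert (1 <= INR m ^ 2) by (rewrite <- (pow1 2); apply pow_incr; lra).
  assert (HX : 1 <= exp 1 * INR m ^ 2) by (apply Rle_trans with (1 * 1); [lra|]; apply Rmult_le_compat; lra).
  apply Rmult_le_reg_l with (exp 1 * INR m ^ 2); [lra|]. rewrite Rinv_r by lra. lra.
Qed.

Lemma drift x : tree x -> Rsum bs (fun y => mut x y * Phi (sel x y)) <= (1 - delta) * Phi x.
Proof.
  intros Ht. pose proof Ht as (Hlx & _).
  set (F := fun y => mut x y * (Phi x - Phi (sel x y))).
  assert (E : Rsum bs (fun y => mut x y * Phi (sel x y)) = Phi x - Rsum bs F).
  { assert (Rsum bs F = Rsum bs (fun y => mut x y * Phi x - mut x y * Phi (sel x y))) as ->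
      by (apply Rsum_ext; intros; unfold F; ring).
    rewrite Rsum_minus, Rsum_mult_r, mut_sum by auto. ring. }
  assert (K : delta * Phi x <= Rsum bs F); [|rewrite E; lra].
  set (I := filter (fun k => nth k x false && negb (partner n es ws Hn x k =? k)) (seq 0 m)).
  set (yk := fun k => upd (upd x k false) (partner n es ws Hn x k) true).
  assert (HI : forall k, In k I -> (k < m)%nat /\ nth k x false = true /\ partner n es ws Hn x k <> k /\
                  PS es ws x k (partner n es ws Hn x k)).
  { intros k Hk. unfold I in Hk. apply filter_In in Hk. destruct Hk as [Hk Hb].
    apply in_seq in Hk. apply andb_true_iff in Hb. destruct Hb as [Hb1 Hb2].
    apply negb_true_iff, Nat.eqb_neq in Hb2. split; [lia|]. split; auto. split; auto.
    apply partner_spec; auto; lia. }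
  assert (Hlen : forall k, length (yk k) = m) by (intros; unfold yk; rewrite !upd_length; auto).
  apply Rle_trans with (Rsum (map yk I) F).
  2:{ apply Rsum_subset.
      - apply NoDup_map_NoDup_ForallPairs; [|apply NoDup_filter, seq_NoDup].
        intros a b Ha Hb Hab. destruct (Nat.eq_dec a b) as [|Hne]; auto. exfalso.
        destruct (HI a Ha) as (Ha1&Ha2&Ha3&_). destruct (HI b Hb) as (Hb1&Hb2&Hb3&_).
        assert (A1 : nth a (yk a) false = false).
        { unfold yk. rewrite nth_upd_neq by auto. apply nth_upd_eq; lia. }
        assert (A2 : nth a (yk b) false = true).
        { unfold yk. destruct (Nat.eq_dec a (partner n es ws Hn x b)) as [->|Hn2].
          - apply nth_upd_eq. rewrite upd_length; lia.
          - rewrite nth_upd_neq, nth_upd_neq; auto. }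
        rewrite Hab in A1. congruence.
      - apply bits_nodup.
      - intros y Hy. apply in_map_iff in Hy. destruct Hy as [k [<- _]]. apply bits_in; auto.
      - intros y _. unfold F. apply Rmult_le_pos. apply mut_nn. pose proof (Phi_sel_le x y). lra. }
  rewrite Rsum_map.
  apply Rle_trans with (Rsum I (fun k => delta * INR (w ws k - cw n es ws Hn x k)%nat)).
  - rewrite Rsum_mult_l. apply Rmult_le_compat_l. left; apply delta_bounds.
    rewrite Rsum_INR. unfold I. rewrite sumL_filter.
    rewrite (sumL_ext _ _ (fun k => if nth k x false then (w ws k - cw n es ws Hn x k)%nat else 0%nat)).
    2:{ intros k _. destruct (nth k x false); simpl; auto. destruct (Nat.eqb_spec (partner n es ws Hn x k) k) as [E'|]; simpl; auto.
        unfold cw; rewrite E'; lia. }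
    unfold Phi. apply le_INR. pose proof (gain_main n es ws Hend Hn x ystar Ht (proj1 Hmst) Hws). lia.
  - apply Rsum_le. intros k Hk. destruct (HI k Hk) as (Hk1 & Hk2 & Hk3 & Hk4 & Hk5 & _).
    set (p := partner n es ws Hn x k) in *.
    assert (Hyt : tree (yk k)) by (apply exch_tree; auto).
    assert (Hxp : nth p x false = false) by (eapply cross_false; eauto).
    pose proof (weight_upd_f ws x k ltac:(congruence) ltac:(lia) Hk2) as W1.
    pose proof (weight_upd_t ws (upd x k false) p ltac:(rewrite upd_length; congruence)
                  ltac:(rewrite upd_length; lia) ltac:(rewrite nth_upd_neq; auto)) as W2.
    change (upd (upd x k false) p true) with (yk k) in W2.
    pose proof (cw_le n es ws Hn x k Ht Hk1 Hk2) as Hcw. unfold cw, w in Hcw. fold p in Hcw.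
    assert (Hsel : sel x (yk k) = yk k).
    { unfold ea_select. destruct (excluded_middle_informative _) as [|Hno]; auto.
      exfalso; apply Hno; split; auto. lia. }
    unfold F. rewrite Hsel.
    assert (Hopt : (weight ws ystar <= weight ws (yk k))%nat) by (apply (proj2 Hmst); auto).
    assert (HD : Phi x - Phi (yk k) = INR (w ws k - cw n es ws Hn x k)%nat).
    { unfold Phi, cw, w. fold p. rewrite <- minus_INR by lia. f_equal. lia. }
    rewrite HD. apply Rmult_le_compat_r. apply pos_INR.
    rewrite mut_ham by (rewrite Hlen; auto). unfold yk. fold p. rewrite ham_two by (auto; lia). rewrite Hlx.
    apply flip2_bound. lia.
Qed.

Definition A t := Rsum bs (fun z => surv t z * Phi z).

Lemma A_step t : A (S t) <= (1 - delta) * A t.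
Proof.
  unfold A. eapply Rle_trans. apply step_le. apply Phi_nonneg.
  rewrite <- Rsum_mult_l. apply Rsum_le. intros x _.
  destruct (classic (tree x)) as [Hx|Hx].
  - rewrite <- Rmult_assoc, (Rmult_comm (1 - delta)), Rmult_assoc.
    apply Rmult_le_compat_l. apply surv_nonneg. apply drift; auto.
  - rewrite surv_tree; auto. right; ring.
Qed.

Lemma A_bound t : A t <= (1 - delta) ^ t * A 0.
Proof.
  induction t. simpl; lra. pose proof delta_bounds.
  eapply Rle_trans. apply A_step. simpl. rewrite Rmult_assoc. apply Rmult_le_compat_l; lra.
Qed.

Lemma x0_bs : In x0 bs.
Proof. apply bits_in. apply Hx0. Qed.

Lemma surv0_le z : surv 0 z <= indicator (x0 = z).
Proof.
  simpl. destruct (classic (z = x0)) as [->|Hne].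
  - rewrite (ind_true (x0 = x0)) by auto. apply ind_bounds.
  - rewrite !ind_false; [lra| |]; intros; try tauto. congruence.
Qed.

Lemma A0_le : A 0 <= Phi x0.
Proof.
  unfold A. rewrite <- (Rsum_ind bs x0 Phi); [|apply bits_nodup|apply x0_bs].
  apply Rsum_le. intros z _. apply Rmult_le_compat_r. apply Phi_nonneg. apply surv0_le.
Qed.

Lemma tail_le_A t : tail_prob n es ws x0 t <= A t.
Proof.
  unfold tail_prob, A. apply Rsum_le. intros z _.
  destruct (Req_dec (surv t z) 0) as [E|E].
  - rewrite E; right; ring.
  - destruct (surv_pos t z E) as [H1 H2]. pose proof (Phi_ge1 z H1 H2). pose proof (surv_nonneg t z).
    rewrite <- (Rmult_1_r (surv t z)) at 1. apply Rmult_le_compat_l; auto.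
Qed.

Lemma tail_nonneg t : 0 <= tail_prob n es ws x0 t.
Proof. apply Rsum_nonneg; intros; apply surv_nonneg. Qed.

Lemma tail_le1 t : tail_prob n es ws x0 t <= 1.
Proof.
  induction t.
  - unfold tail_prob. rewrite <- (Rsum_ind bs x0 (fun _ => 1)); [|apply bits_nodup|apply x0_bs].
    apply Rsum_le. intros z _. rewrite Rmult_1_r. apply surv0_le.
  - unfold tail_prob in *. rewrite (Rsum_ext _ _ (fun z => surv (S t) z * 1)) by (intros; ring).
    eapply Rle_trans. apply step_le. intros; lra.
    eapply Rle_trans; [|apply IHt]. right. apply Rsum_ext. intros x Hx.
    rewrite (Rsum_ext _ _ (fun y => mut x y)) by (intros; ring). rewrite mut_sum. ring.
    apply bits_in; auto.
Qed.

Lemma tail_geom t : tail_prob n es ws x0 t <= INR (m * wmax ws) * (1 - delta) ^ t.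
Proof.
  eapply Rle_trans. apply tail_le_A. eapply Rle_trans. apply A_bound.
  rewrite Rmult_comm. apply Rmult_le_compat_r. pose proof delta_bounds. apply pow_le; lra.
  eapply Rle_trans. apply A0_le. unfold Phi. apply le_INR. pose proof (weight_bound ws x0). rewrite Hws in H. lia.
Qed.

End Chain.

Lemma ln_nonneg D : 1 <= D -> 0 <= ln D.
Proof.
  intros H. destruct (Req_dec D 1) as [->|Hne]. rewrite ln_1; lra.
  rewrite <- ln_1. left; apply ln_increasing; lra.
Qed.

Lemma exp_le a b : a <= b -> exp a <= exp b.
Proof. intros [H|H]; [left; apply exp_increasing; auto|subst; lra]. Qed.

Lemma nat_ceil x : 0 <= x -> exists K : nat, (1 <= K)%nat /\ x <= INR K <= x + 1.
Proof.
  intros Hx. destruct (archimed x) as [H1 H2].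
  assert (Hz : (0 < up x)%Z) by (apply lt_IZR; simpl; lra).
  exists (Z.to_nat (up x)).
  assert (E : INR (Z.to_nat (up x)) = IZR (up x)) by (rewrite INR_IZR_INZ, Z2Nat.id; auto; lia).
  rewrite E. split; [lia|lra].
Qed.

Lemma series_bound (a : nat -> R) D d : 0 < d <= 1 -> 1 <= D ->
  (forall t, 0 <= a t) -> (forall t, a t <= 1) -> (forall t, a t <= D * (1 - d) ^ t) ->
  exists E, infinite_sum a E /\ E <= ln D / d + 1 + / d.
Proof.
  intros Hd HD Ha0 Ha1 HaD.
  set (r := 1 - d).
  assert (Hr : 0 <= r <= 1 - d) by (unfold r; lra).
  destruct (nat_ceil (ln D / d)) as [K (HK1 & HK2 & HK3)].
  { apply Rmult_le_pos. apply ln_nonneg; auto. left; apply Rinv_0_lt_compat; lra. }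
  set (B := INR K + D * r ^ K / d).
  assert (C1 : forall N, sum_f_R0 a N <= INR N + 1).
  { induction N; simpl. specialize (Ha1 0%nat); lra.
    specialize (Ha1 (S N)). destruct N; simpl in *; lra. }
  assert (Hgeo : forall k, r ^ k - r ^ (S k) = d * r ^ k) by (intros; simpl; unfold r; ring).
  assert (C2 : forall j, sum_f_R0 a (K + j) <= INR K + D * (r ^ K - r ^ (S (K + j))) / d).
  { induction j.
    - rewrite Nat.add_0_r. destruct K as [|K']; [lia|].
      change (sum_f_R0 a (S K')) with (sum_f_R0 a K' + a (S K')).
      pose proof (C1 K'). pose proof (HaD (S K')). rewrite Hgeo.
      replace (D * (d * r ^ S K') / d) with (D * r ^ S K') by (field; lra).
      rewrite S_INR. fold r in H0. lra.
    - replace (K + S j)%nat with (S (K + j)) by lia.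
      change (sum_f_R0 a (S (K + j))) with (sum_f_R0 a (K + j) + a (S (K + j))).
      pose proof (HaD (S (K + j))). fold r in H.
      assert (D * (r ^ K - r ^ S (S (K + j))) / d = D * (r ^ K - r ^ S (K + j)) / d + D * r ^ S (K + j)).
      { replace (r ^ K - r ^ S (S (K + j))) with ((r ^ K - r ^ S (K + j)) + (r ^ S (K+j) - r ^ S (S (K + j)))) by ring.
        rewrite Hgeo. field. lra. }
      lra. }
  assert (Hub : forall N, sum_f_R0 a N <= B).
  { intros N. unfold B. destruct (lt_dec N K) as [L|L].
    - pose proof (C1 N). assert (INR N + 1 <= INR K) by (rewrite <- S_INR; apply le_INR; lia).
      assert (0 <= D * r ^ K / d).
      { apply Rmult_le_pos. apply Rmult_le_pos. lra. apply pow_le; lra. left; apply Rinv_0_lt_compat; lra. }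
      lra.
    - replace N with (K + (N - K))%nat by lia. pose proof (C2 (N - K)%nat).
      assert (0 <= D * r ^ S (K + (N - K)) / d).
      { apply Rmult_le_pos. apply Rmult_le_pos. lra. apply pow_le; lra. left; apply Rinv_0_lt_compat; lra. }
      unfold Rdiv in *. lra. }
  assert (Hgrow : Un_growing (fun N => sum_f_R0 a N)).
  { intros N. simpl. specialize (Ha0 (S N)). lra. }
  destruct (growing_cv _ Hgrow) as [l Hl].
  { exists B. intros y [N ->]. apply Hub. }
  exists l. split.
  - exact Hl.
  - assert (HlB : l <= B).
    { destruct (Rle_dec l B) as [|Hgt]; auto. exfalso.
      destruct (Hl (l - B)) as [N HN]; [lra|]. specialize (HN N (le_n N)).
      unfold R_dist in HN. apply Rabs_def2 in HN. specialize (Hub N). lra. }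
    assert (HrK : D * r ^ K <= 1).
    { apply Rle_trans with (D * exp (- d) ^ K).
      - apply Rmult_le_compat_l; [lra|]. apply pow_incr. split; [lra|].
        pose proof (exp_ineq1_le (- d)). unfold r; lra.
      - rewrite exp_pow. apply Rle_trans with (D * exp (- ln D)).
        + apply Rmult_le_compat_l; [lra|]. apply exp_le.
          assert (ln D <= d * INR K).
          { apply Rle_trans with (d * (ln D / d)); [right; field; lra|]. apply Rmult_le_compat_l; lra. }
          lra.
        + rewrite exp_Ropp, exp_ln by lra. right; field; lra. }
    unfold B in HlB. assert (D * r ^ K / d <= / d).
    { unfold Rdiv. rewrite <- (Rmult_1_l (/ d)) at 2. apply Rmult_le_compat_r; auto.
      left; apply Rinv_0_lt_compat; lra. }
    lra.
Qed.

Theorem theorem11 (n : nat) (es : list (nat * nat)) (ws : list nat) (x0 : list bool) :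
  simple_graph n es ->
  connected_graph n es ->
  (1 <= length es)%nat ->
  length ws = length es ->
  Forall (fun w => (1 <= w)%nat) ws ->
  is_spanning_tree n es x0 ->
  exists E : R,
    infinite_sum (tail_prob n es ws x0) E /\
    E <= 2 * exp 1 * INR (length es) ^ 2
           * (1 + ln (INR (length es)) + ln (INR (wmax ws))).
Proof.
  intros Hsg _ Hm Hws Hpos Hx0.
  assert (Hend : forall e, In e es -> (fst e < n)%nat /\ (snd e < n)%nat).
  { intros e He. destruct Hsg as [H _]. destruct (H e He) as (?&?&?); auto. }
  assert (Hn : (0 < n)%nat).
  { destruct es as [|e es']; simpl in Hm; [lia|]. destruct (Hend e (or_introl eq_refl)); lia. }
  destruct (min_ex (fun k => exists y, is_spanning_tree n es y /\ weight ws y = k)) as [k [[ystar [Hys Hk]] Hmin]].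
  { eauto. }
  assert (Hmst : is_mst n es ws ystar).
  { split; auto. intros y Hy. destruct (le_lt_dec (weight ws ystar) (weight ws y)); auto.
    exfalso. apply (Hmin (weight ws y)); [lia|]. eauto. }
  assert (Hw1 : (1 <= wmax ws)%nat).
  { destruct ws as [|w0 ws']; simpl in Hws; [lia|]. inversion Hpos; subst.
    apply Nat.le_trans with w0; auto. apply (wmax_ge (w0 :: ws' ) 0). }
  set (m := length es) in *.
  set (D := INR (m * wmax ws)).
  assert (HD : 1 <= D) by (unfold D; apply (le_INR 1); nia).
  destruct (series_bound (tail_prob n es ws x0) D (delta es)) as [E [HE HEb]]; auto.
  - apply (delta_bounds n es ws); auto.
  - apply tail_nonneg; auto.
  - apply tail_le1; auto.
  - intros t. apply (tail_geom n es ws x0 ystar); auto.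
  - exists E; split; auto.
    assert (Hm1 : 1 <= INR m) by (apply (le_INR 1); auto).
    assert (Hw1' : 1 <= INR (wmax ws)) by (apply (le_INR 1); auto).
    assert (HlnD : ln D = ln (INR m) + ln (INR (wmax ws))).
    { unfold D. rewrite mult_INR, ln_mult; lra. }
    assert (Hid : / delta es = exp 1 * INR m ^ 2).
    { unfold delta. rewrite Rinv_inv. auto. }
    unfold Rdiv in HEb. rewrite Hid, HlnD in HEb.
    pose proof (ln_nonneg _ Hm1). pose proof (ln_nonneg _ Hw1').
    set (c := exp 1 * INR m ^ 2) in *.
    assert (Hc : 1 <= c).
    { unfold c. pose proof (exp_ineq1_le 1).
      assert (1 <= INR m ^ 2) by (rewrite <- (pow1 2); apply pow_incr; lra).
      apply Rle_trans with (1 * 1); [lra|]. apply Rmult_le_compat; lra. }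
    set (L := ln (INR m) + ln (INR (wmax ws))) in *.
    assert (0 <= c * L) by (apply Rmult_le_pos; unfold L; lra).
    replace (2 * exp 1 * INR m ^ 2 * (1 + ln (INR m) + ln (INR (wmax ws)))) with (2 * c * (1 + L))
      by (unfold c, L; ring).
    nra.
Qed.
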